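(* For all integers $r\ge1$ and $n\ge 1$, \[K_{A_r}(n\tilde\alpha_{A_r})=\mathsf{js}(\langle n\rangle,\langle n\rangle,r),\] where $\tilde\alpha_{A_r}=\varepsilon_1-\varepsilon_{r+1}$.
   Context: A juggling state is a finitely supported integer vector $\mathbf{s}=\langle s_1,s_2,\dots\rangle$ indexed by heights (trailing zeros omitted). A juggling sequence of length $n$ from $\mathbf{a}$ to $\mathbf{b}$ is a sequence $(\mathbf{s}_0,\dots,\mathbf{s}_n)$ with $\mathbf{s}_0=\mathbf{a}$, $\mathbf{s}_n=\mathbf{b}$, such that for each $i$ there are nonnegative integers $c^{(i)}_k$ (finitely many nonzero) with $\sum_k c^{(i)}_k=(\mathbf{s}_{i-1})_1$ and $(\mathbf{s}_i)_k=(\mathbf{s}_{i-1})_{k+1}+c^{(i)}_k$ for all $k\ge1$. $\mathsf{js}(\mathbf{a},\mathbf{b},n)$ is the number of such sequences. $\Phi^+_{A_r}=\{\varepsilon_i-\varepsilon_j:1\le i<j\le r+1\}\subset\mathbb{R}^{r+1}$; $K_{A_r}(\mu)$ is the number of finite multisets of elements of $\Phi^+_{A_r}$ summing to $\mu$. *)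

(* Defs.v *)
From HB Require Import structures.
From mathcomp Require Import all_boot all_order all_algebra.
Set Implicit Arguments. Unset Strict Implicit. Unset Printing Implicit Defensive.
Import Order.TTheory GRing.Theory Num.Theory.
Local Open Scope ring_scope.

Definition HasCard (T : eqType) (P : T -> Prop) (N : nat) : Prop :=
  exists s : seq T, [/\ uniq s, (forall x, P x <-> x \in s) & size s = N].

(* positive roots eps_i - eps_j, i < j, indexed by pairs *)
Definition posroot (r : nat) := {p : 'I_r.+1 * 'I_r.+1 | (p.1 < p.2)%N}.

(* standard basis vector eps_i (0-indexed: eps_1 is index ord0) *)
Definition eps (r : nat) (i : 'I_r.+1) : 'I_r.+1 -> int :=
  fun t => ((t == i) : nat)%:Z.

Definition root_vec (r : nat) (p : posroot r) : 'I_r.+1 -> int :=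
  fun t => eps (val p).1 t - eps (val p).2 t.

Definition alpha_tilde (r : nat) : 'I_r.+1 -> int :=
  fun t => eps ord0 t - eps ord_max t.

(* a finite multiset of positive roots = multiplicity function;
   it sums to mu *)
Definition KostantMultiset (r : nat) (mu : 'I_r.+1 -> int)
    (m : {ffun posroot r -> nat}) : Prop :=
  forall t : 'I_r.+1, \sum_(p : posroot r) (m p)%:Z * root_vec p t = mu t.

Definition Kostant_is (r : nat) (mu : 'I_r.+1 -> int) (N : nat) : Prop :=
  HasCard (KostantMultiset mu) N.

(* a juggling state <s_1, s_2, ...> is represented by the integer list
   [:: s_1; s_2; ...] with trailing zeros omitted (s`_k is s_{k+1}) *)
Definition is_state (s : seq int) : Prop := last 1 s != 0.

(* one throw: there are c_k >= 0 (finitely many nonzero, c`_k = c_{k+1})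
   with sum c = s_1 and t_k = s_{k+1} + c_k for all k >= 1 *)
Definition jstep (s t : seq int) : Prop :=
  exists c : seq nat,
    (sumn c)%:Z = s`_0 /\ forall k : nat, t`_k = s`_k.+1 + (nth 0%N c k)%:Z.

Definition is_juggling_seq (a b : seq int) (n : nat) (ss : seq (seq int)) : Prop :=
  [/\ size ss = n.+1,
      (forall s, s \in ss -> is_state s),
      nth [::] ss 0 = a,
      nth [::] ss n = b &
      (forall i, (i < n)%N -> jstep (nth [::] ss i) (nth [::] ss i.+1))].

Definition js_is (a b : seq int) (n N : nat) : Prop :=
  HasCard (is_juggling_seq a b n) N.

(* Main.v *)
Require Import Defs.
From HB Require Import structures.
From mathcomp Require Import all_boot all_order all_algebra.
From mathcomp Require Import zify.
From Stdlib Require Import Classical.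
Import Order.TTheory GRing.Theory Num.Theory.
Set Implicit Arguments. Unset Strict Implicit.
Local Open Scope nat_scope.

Definition Mf (r : nat) (m : {ffun posroot r -> nat}) (a b : nat) : nat :=
  if (a < b) && (b <= r) then
    (if (insub (inord a : 'I_r.+1, inord b : 'I_r.+1) : option (posroot r))
       is Some p then m p else 0) else 0.

Lemma Mf0 r m a b : ~~ ((a < b) && (b <= r)) -> @Mf r m a b = 0.
Proof. by rewrite /Mf => /negbTE ->. Qed.

Lemma Mf_val r m (p : posroot r) : Mf m (val p).1 (val p).2 = m p.
Proof.
rewrite /Mf; case: p => [[i j] /= ij].
rewrite ij -ltnS ltn_ord insubT /=; first by rewrite !inord_val.
move=> H; congr (m _); apply: val_inj => /=; by rewrite !inord_val.
Qed.

Lemma sum_widen0 (F : nat -> nat) N1 N2 : N1 <= N2 ->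
  (forall j, N1 <= j -> j < N2 -> F j = 0) ->
  \sum_(j < N2) F j = \sum_(j < N1) F j.
Proof.
move=> le H; rewrite (big_ord_widen N2 F le) [RHS]big_mkcond /=.
apply: eq_bigr => j _; case: ifP => // /negbT; rewrite -leqNgt => h.
by rewrite H.
Qed.

Definition out r m (t : nat) := \sum_(j < r.+1) @Mf r m t j.
Definition inn r m (t : nat) := \sum_(i < r.+1) @Mf r m i t.

Lemma inn_lt r m t : t <= r -> inn m t = \sum_(a < t) @Mf r m a t.
Proof.
move=> tr; rewrite /inn (sum_widen0 (F := fun a => Mf m a t) (N1 := t)) //; first lia.
by move=> a ta _; apply: Mf0; rewrite ltnNge ta.
Qed.

Lemma out_shift r m t : out m t = \sum_(k < r.+1) @Mf r m t (t + k).+1.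
Proof.
rewrite /out -(sum_widen0 (F := fun j => Mf m t j) (N2 := t.+1 + r.+1)) //; last first.
  by move=> j rj _; apply: Mf0; apply/negP => /andP [] _; lia.
  lia.
rewrite big_split_ord /= big1 ?add0n //.
move=> i _; apply: Mf0; apply/negP => /andP [] h _; have := ltn_ord i; lia.
Qed.

Local Open Scope ring_scope.
Lemma Posz_sum (I : finType) (P : pred I) (F : I -> nat) :
  ((\sum_(i | P i) F i)%N)%:Z = (\sum_(i | P i) (F i)%:Z)%R.
Proof. by rewrite -natz natr_sum; apply: eq_bigr => i _; rewrite natz. Qed.

Lemma sum_posroot r (F : 'I_r.+1 * 'I_r.+1 -> int) :
  (\sum_(p : posroot r) F (val p) = \sum_(q : 'I_r.+1 * 'I_r.+1 | (q.1 < q.2)%N) F q)%R.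
Proof.
rewrite [RHS](reindex_omap (val : posroot r -> _) insub); last first.
  by move=> q qP; rewrite insubT.
by apply: eq_bigl => -[q qP] /=; rewrite qP insubT /= eqxx.
Qed.

Lemma kost_sum r (m : {ffun posroot r -> nat}) (t : 'I_r.+1) :
  (\sum_(p : posroot r) (m p)%:Z * root_vec p t = (out m t)%:Z - (inn m t)%:Z)%R.
Proof.
pose G (q : 'I_r.+1 * 'I_r.+1) :=
  ((Mf m q.1 q.2)%:Z * (eps q.1 t - eps q.2 t))%R.
transitivity (\sum_(p : posroot r) G (val p))%R.
  by apply: eq_bigr => p _; rewrite /G Mf_val.
rewrite sum_posroot big_mkcond /=.
rewrite (eq_bigr G); last first.
  move=> q _; case: ifP => // /negbT h.
  by rewrite /G Mf0 ?mul0r // negb_and h.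
rewrite -(pair_bigA _ (fun i j => G (i, j))) /G /=.
under eq_bigr do under eq_bigr do rewrite mulrBr.
under eq_bigr do rewrite sumrB.
rewrite sumrB; congr (_ - _)%R.
- rewrite (bigD1 t) //= [X in _ + X]big1 ?addr0.
    by rewrite /out Posz_sum; apply: eq_bigr => j _; rewrite /eps eqxx mulr1.
  move=> i it; apply: big1 => j _.
  by rewrite /eps eq_sym (negbTE it) mulr0.
- rewrite exchange_big (bigD1 t) //= [X in _ + X]big1 ?addr0.
    by rewrite /inn Posz_sum; apply: eq_bigr => j _; rewrite /eps eqxx mulr1.
  move=> i it; apply: big1 => j _.
  by rewrite /eps eq_sym (negbTE it) mulr0.
Qed.

Definition flow r n (m : {ffun posroot r -> nat}) :=
  forall t : 'I_r.+1, (out m t + (t == ord_max) * n = inn m t + (t == ord0) * n)%N.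

Lemma kost_flow r n m : (1 <= r)%N ->
  KostantMultiset (fun t : 'I_r.+1 => n%:Z * alpha_tilde t) m <-> flow n m.
Proof.
move=> r1; rewrite /KostantMultiset /flow.
have H0 : forall t : 'I_r.+1, (t == ord0) && (t == ord_max) = false.
  by move=> t; apply/negP => /andP [/eqP -> /eqP] /(congr1 val) /=; lia.
split => H t; have := H t; rewrite ?kost_sum /alpha_tilde /eps;
  have := H0 t; case: (t == ord0); case: (t == ord_max) => //= _; lia.
Qed.

Fixpoint trim (s : seq int) : seq int :=
  match s with
  | [::] => [::]
  | x :: s' => let t := trim s' in if (t == [::]) && (x == 0) then [::] else x :: t
  end.

Lemma nth_trim s k : (trim s)`_k = s`_k.
Proof.
elim: s k => [|x s IH] k //=.
case: ifP => [/andP [/eqP e /eqP ->]|_]; last by case: k.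
by case: k => //= k; rewrite -IH e nth_nil.
Qed.

Lemma trim_state s : is_state (trim s).
Proof.
rewrite /is_state; elim: s => [|x s IH] //=.
case: ifP => // /negbT; rewrite negb_and => h.
case E: (trim s) => [|y t] /=; last by move: IH; rewrite E.
by move: h; rewrite E eqxx.
Qed.

Lemma state_size s k : is_state s -> (0 < size s)%N -> k = (size s).-1 -> s`_k != 0.
Proof.
rewrite /is_state => h sz ->; rewrite nth_last.
by case: s h sz.
Qed.

Lemma state_eq s t : is_state s -> is_state t -> (forall k, s`_k = t`_k) -> s = t.
Proof.
move=> hs ht e.
have sz : size s = size t.
  apply/eqP; rewrite eqn_leq; apply/andP; split; rewrite leqNgt; apply/negP => lt.
  - have := state_size hs (leq_ltn_trans (leq0n _) lt) (erefl _).
    by rewrite e nth_default ?eqxx // -ltnS (ltn_predK lt).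
  - have := state_size ht (leq_ltn_trans (leq0n _) lt) (erefl _).
    by rewrite -e nth_default ?eqxx // -ltnS (ltn_predK lt).
by apply: (@eq_from_nth _ 0) => // k _; apply: e.
Qed.

Local Open Scope nat_scope.

Definition st r n (m : {ffun posroot r -> nat}) i k : nat :=
  (i + k == 0) * n + \sum_(a < i) Mf m a (i + k).
Definition Fst r n (m : {ffun posroot r -> nat}) i : seq int :=
  trim (mkseq (fun k => Posz (st n m i k)) r.+1).
Definition Fseq r n (m : {ffun posroot r -> nat}) := mkseq (Fst n m) r.+1.

Lemma st_big r n m i k : r < i + k -> @st r n m i k = 0.
Proof.
move=> h; rewrite /st; have -> : (i + k == 0) = false by apply/eqP; lia.
rewrite big1 // => a _; apply: Mf0; apply/negP => /andP [] _; lia.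
Qed.

Lemma nth_Fst r n m i k : nth 0%R (@Fst r n m i) k = Posz (st n m i k).
Proof.
rewrite nth_trim; case: (ltnP k r.+1) => h; first by rewrite nth_mkseq.
by rewrite nth_default ?size_mkseq // st_big //; lia.
Qed.

Lemma nth_Fseq r n m i : i <= r -> nth [::] (@Fseq r n m) i = Fst n m i.
Proof. by move=> h; rewrite nth_mkseq. Qed.

Lemma st_succ r n m i k :
  @st r n m i.+1 k = st n m i k.+1 + Mf m i (i + k).+1.
Proof.
rewrite /st big_ord_recr /= addSn addnS /= addnA.
by [].
Qed.

Lemma sumn_mkseq f N : sumn (mkseq f N) = \sum_(k < N) f k.
Proof. by rewrite sumnE /mkseq big_map -(big_mkord xpredT) /index_iota subn0. Qed.

Lemma flow_nat r n m i : i <= r -> @flow r n m ->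
  out m i + (i == r) * n = inn m i + (i == 0) * n.
Proof.
move=> ir H; have := H (inord i).
by rewrite -!val_eqE /= inordK.
Qed.

Lemma out_last r m : @out r m r = 0.
Proof. by rewrite /out big1 // => j _; apply: Mf0; have := ltn_ord j; lia. Qed.

Lemma F_juggling r n m : 1 <= r -> 1 <= n -> @flow r n m ->
  is_juggling_seq [:: Posz n] [:: Posz n] r (Fseq n m).
Proof.
move=> r1 n1 H; split.
- by rewrite size_mkseq.
- by move=> s /mapP [i _ ->]; apply: trim_state.
- rewrite nth_Fseq //; apply: state_eq; first exact: trim_state.
    by rewrite /is_state /=; lia.
  move=> k; rewrite nth_Fst /st big_ord0 addn0 add0n.
  by case: k => [|k] /=; [rewrite mul1n | rewrite nth_nil].
- rewrite nth_Fseq //; apply: state_eq; first exact: trim_state.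
    by rewrite /is_state /=; lia.
  move=> [|k]; last by rewrite nth_Fst st_big /= ?nth_nil //; lia.
  rewrite nth_Fst /st addn0 -inn_lt //.
  have := flow_nat (leqnn r) H; rewrite out_last eqxx.
  have -> : (r == 0) = false by lia.
  by rewrite addn0 add0n mul1n => <-.
- move=> i ir; exists (mkseq (fun k => Mf m i (i + k).+1) r.+1); split.
    rewrite sumn_mkseq -out_shift nth_Fseq ?nth_Fst; last lia.
    rewrite /st addn0 -inn_lt; last lia.
    have := flow_nat (ltnW ir) H; have -> : (i == r) = false by lia.
    by rewrite addn0 addnC => ->.
  move=> k; rewrite !nth_Fseq ?nth_Fst ?st_succ; try lia.
  rewrite PoszD; congr (_ + _)%R; congr Posz.
  case: (ltnP k r.+1) => h; first by rewrite nth_mkseq.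
  by rewrite nth_default ?size_mkseq // Mf0 //; apply/negP => /andP [] _; lia.
Qed.

Definition Gm (ss : seq (seq int)) a b : int :=
  ((nth [::] ss a.+1)`_(b - a - 1) - (nth [::] ss a)`_(b - a))%R.
Definition G r (ss : seq (seq int)) : {ffun posroot r -> nat} :=
  [ffun p : posroot r => absz (Gm ss (val p).1 (val p).2)].

Lemma jstep_ge0 s t : jstep s t -> forall k, (0 <= t`_k - s`_k.+1)%R.
Proof. by move=> [c [_ e]] k; rewrite e addrAC subrr add0r. Qed.

Lemma g2 ss n : nth [::] ss 0 = [:: Posz n] -> forall i k,
  ((nth [::] ss i)`_k = Posz ((i + k == 0) * n)%N + \sum_(a < i) Gm ss a (i + k)%N)%R.
Proof.
move=> h0; elim=> [|i IH] k.
  rewrite h0 big_ord0 addr0; case: k => [|k] /=; first by lia.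
  by rewrite nth_nil.
have z : forall b, b != 0 -> ((b == 0) * n = 0)%N by move=> b /negbTE ->.
rewrite big_ord_recr /= addrA.
have IHk := IH k.+1.
have hb : i + k.+1 = i.+1 + k by lia.
rewrite hb !z // in IHk *.
rewrite -IHk /Gm.
have -> : i.+1 + k - i - 1 = k by lia.
have -> : i.+1 + k - i = k.+1 by lia.
by rewrite addrC subrK.
Qed.

Definition JS r n ss := is_juggling_seq [:: Posz n] [:: Posz n] r ss.

Lemma g1 r n ss a b : JS r n ss -> a < r -> a < b -> (0 <= Gm ss a b)%R.
Proof.
case=> _ _ _ _ hj ar ab; have := jstep_ge0 (hj a ar) (b - a - 1).
by rewrite /Gm; have -> : (b - a - 1).+1 = b - a by lia.
Qed.

Lemma g3 r n ss a b : JS r n ss -> a < r -> r < b -> Gm ss a b = 0%R.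
Proof.
move=> J ar rb; case: (J) => _ _ h0 hr _.
have := g2 h0 r (b - r).
have -> : r + (b - r) = b by lia.
rewrite hr (_ : b - r = (b - r).-1.+1); last by lia.
rewrite /= nth_nil.
have -> : ((b == 0) * n)%N = 0%N by have -> : (b == 0) = false by lia.
rewrite add0r => /esym h.
have nn : forall i : 'I_r, true -> (0 <= Gm ss i b)%R.
  by move=> i _; apply: (g1 J) => //; have := ltn_ord i; lia.
exact: (psumr_eq0P nn h (i := Ordinal ar) isT).
Qed.

Lemma g4 r n ss a b : JS r n ss -> a < r -> a < b ->
  Posz (Mf (G r ss) a b) = Gm ss a b.
Proof.
move=> J ar ab; case: (leqP b r) => br; last first.
  by rewrite Mf0 ?(g3 J) //; apply/negP => /andP [] _; lia.
have P : (inord a : 'I_r.+1) < (inord b : 'I_r.+1) by rewrite !inordK; lia.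
rewrite /Mf ab br /= (insubT (fun q : 'I_r.+1 * 'I_r.+1 => q.1 < q.2) (x := (inord a, inord b)) P) /= ffunE /= !inordK; try lia.
by rewrite gez0_abs // (g1 J).
Qed.

Lemma gst r n ss i k : JS r n ss -> i <= r ->
  Posz (st n (G r ss) i k) = nth 0%R (nth [::] ss i) k.
Proof.
move=> J ir; case: (J) => _ _ h0 _ _.
rewrite (g2 h0) /st PoszD Posz_sum; congr (_ + _)%R.
apply: eq_bigr => a _; apply: (g4 J); have := ltn_ord a; lia.
Qed.

Lemma GF r n ss : JS r n ss -> Fseq n (G r ss) = ss.
Proof.
move=> J; case: (J) => sz hs _ _ _.
apply: (@eq_from_nth _ [::]); first by rewrite size_mkseq sz.
move=> i; rewrite size_mkseq => ir; rewrite nth_Fseq //.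
apply: state_eq; first exact: trim_state.
  by apply: hs; apply: mem_nth; rewrite sz.
by move=> k; rewrite nth_Fst (gst _ J).
Qed.

Lemma sumn_nth (c : seq nat) : sumn c = \sum_(k < size c) nth 0 c k.
Proof. by rewrite sumnE (big_nth 0) big_mkord. Qed.

Lemma KG r n ss : JS r n ss -> 1 <= r -> flow n (G r ss).
Proof.
move=> J r1 t; case: (J) => _ _ _ hr hj.
have tr := ltn_ord t; rewrite ltnS leq_eqVlt in tr.
case/orP: tr => [/eqP tr | tr].
- have -> : t == ord_max by apply/eqP/val_inj.
  have -> : (t == ord0) = false by apply/negP => /eqP /(congr1 val) /=; lia.
  rewrite tr out_last inn_lt // add0n addn0 mul1n.
  apply/eqP; rewrite -eqz_nat; apply/eqP.
  have := gst 0 J (leqnn r); rewrite hr /= /st addn0.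
  by have -> : (r == 0) = false by lia.
- have -> : (t == ord_max) = false by apply/negP => /eqP /(congr1 val) /=; lia.
  have -> : (t == ord0) = (t == 0 :> nat) by [].
  have [c [sc e]] := hj t tr.
  have cG : forall k, Posz (nth 0 c k) = Gm ss t (t + k).+1.
    move=> k; rewrite /Gm.
    have -> : (t + k).+1 - t - 1 = k by lia.
    have -> : (t + k).+1 - t = k.+1 by lia.
    by rewrite e addrAC subrr add0r.
  have h1 : out (G r ss) t = sumn c.
    apply/eqP; rewrite -eqz_nat; apply/eqP.
    rewrite out_shift sumn_nth.
    rewrite -(sum_widen0 (N2 := r.+1 + size c) (F := fun k => Mf (G r ss) t (t + k).+1)); try lia.
      rewrite -(sum_widen0 (N2 := r.+1 + size c) (F := fun k => nth 0 c k)); try lia.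
        rewrite !Posz_sum; apply: eq_bigr => k _.
        by rewrite cG (g4 J) //; lia.
      by move=> k hk _; rewrite nth_default.
    move=> k hk _; apply/eqP; rewrite -eqz_nat; apply/eqP.
    by rewrite (g4 J) ?(g3 J) //; lia.
  have h2 : Posz (sumn c) = Posz (st n (G r ss) t 0).
    by rewrite sc (gst _ J) //; lia.
  move: h2 => /eqP; rewrite eqz_nat => /eqP h2.
  rewrite h1 h2 /st addn0 -inn_lt; last lia.
  by rewrite addn0 addnC.
Qed.

Lemma GFm r n m : G r (@Fseq r n m) = m.
Proof.
apply/ffunP => p; rewrite ffunE.
case: p => [[i j] /= ij].
have jr : j <= r by have := ltn_ord j; lia.
rewrite /Gm !nth_Fseq ?nth_Fst; try lia.
have [k hk] : exists k, k = j - i - 1 by eexists.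
rewrite -hk.
have -> : j - i = k.+1 by lia.
rewrite st_succ PoszD addrAC subrr add0r /=.
have -> : (i + k).+1 = j by lia.
by rewrite -[X in _ = m X]/(Sub (i, j) ij) -(Mf_val m (Sub (i, j) ij)).
Qed.

Lemma Mf_le_out r m a b : @Mf r m a b <= out m a.
Proof.
case: (leqP b r) => br; last by rewrite Mf0 //; apply/negP => /andP [] _; lia.
have bo : b < r.+1 by lia.
by rewrite /out (bigD1 (Ordinal bo)) //= leq_addr.
Qed.

Lemma bound r n m : @flow r n m -> forall p, m p <= n * 2 ^ r.
Proof.
move=> H p.
pose S t := \sum_(a < t) out m a.
have h1 : forall t, t < r -> out m t <= n + S t.
  move=> t tr; have := flow_nat (ltnW tr) H.
  have -> : (t == r) = false by lia.
  move=> e; have : out m t <= inn m t + n.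
    by rewrite -[out m t]addn0 e leq_add2l; case: (t == 0); lia.
  move=> /leq_trans; apply; rewrite addnC leq_add2l inn_lt; last lia.
  by apply: leq_sum => a _; apply: Mf_le_out.
have h2 : forall t, t <= r -> S t + n <= n * 2 ^ t.
  elim=> [|t IH] tr; first by rewrite /S big_ord0 expn0; lia.
  rewrite /S big_ord_recr /= -/(S t) expnS.
  have := IH (ltnW tr); have := h1 t tr; nia.
case: p => [[i j] /= ij].
rewrite -[m _](Mf_val m) /=.
have ir : i < r by have := ltn_ord j; lia.
apply: (leq_trans (Mf_le_out _ _ _)); apply: (leq_trans (h1 _ ir)).
apply: (leq_trans (n := n * 2 ^ i)); first by have := h2 i (ltnW ir); lia.
rewrite leq_mul2l leq_pexp2l //; lia.
Qed.

Local Open Scope ring_scope.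
Lemma hascard_fin (T : eqType) (P : T -> Prop) (L : seq T) :
  (forall x, P x -> x \in L) -> exists N, HasCard P N.
Proof.
elim: L P => [|a L IH] P HP.
  by exists 0%N, [::]; split=> // x; split=> // /HP.
have [|N [s [us Hs _]]] := IH (fun x => P x /\ x != a).
  by move=> x [Px xa]; move: (HP x Px); rewrite inE (negbTE xa).
case: (classic (P a)) => Pa.
- exists (size (a :: s)), (a :: s); split=> //=.
    by rewrite us andbT; apply/negP => /Hs [] _; rewrite eqxx.
  move=> x; rewrite inE; case: (eqVneq x a) => [->|xa] /=; first by split.
  by rewrite -Hs; split=> [Px|[]//]; split.
- exists (size s), s; split=> // x; rewrite -Hs; split=> [Px|[]//]; split=> //.
  by apply/eqP => xa; apply: Pa; rewrite -xa.
Qed.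

Lemma hascard_transfer (T U : eqType) (P : T -> Prop) (Q : U -> Prop)
  (f : T -> U) (g : U -> T) N :
  (forall x, P x -> Q (f x)) -> (forall x, P x -> g (f x) = x) ->
  (forall y, Q y -> P (g y)) -> (forall y, Q y -> f (g y) = y) ->
  HasCard P N -> HasCard Q N.
Proof.
move=> PQ gf QP fg [s [us Hs sz]]; exists (map f s); split.
- rewrite map_inj_in_uniq // => x y /Hs Px /Hs Py e.
  by rewrite -(gf _ Px) -(gf _ Py) e.
- move=> y; split=> [Qy|/mapP [x /Hs Px ->]]; last exact: PQ.
  by rewrite -(fg _ Qy); apply: map_f; apply/Hs/QP.
- by rewrite size_map.
Qed.


Local Open Scope nat_scope.

Lemma kost_fin r n : 1 <= r -> exists N,
  HasCard (KostantMultiset (fun t : 'I_r.+1 => (Posz n * alpha_tilde t)%R)) N.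
Proof.
move=> r1.
pose B := n * 2 ^ r.
pose f := fun g : {ffun posroot r -> 'I_B.+1} => [ffun p => nat_of_ord (g p)].
apply: (hascard_fin (L := map f (enum {: {ffun posroot r -> 'I_B.+1}}))).
move=> m /(kost_flow _ _ r1) H.
have -> : m = f [ffun p => inord (m p)].
  apply/ffunP => p; rewrite !ffunE inordK //.
  by rewrite ltnS; apply: bound.
by apply: map_f; rewrite mem_enum.
Qed.

Local Open Scope ring_scope.

Theorem mainTheorem5 (r n : nat) (hr : (1 <= r)%N) (hn : (1 <= n)%N) :
  exists N : nat,
    Kostant_is (fun t : 'I_r.+1 => n%:Z * @alpha_tilde r t) N /\
    js_is [:: n%:Z] [:: n%:Z] r N.
Proof.
have [N HK] := kost_fin n hr.
exists N; split => //.
apply: (hascard_transfer (f := @Fseq r n) (g := G r)) HK.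
- by move=> m /(kost_flow _ _ hr) H; apply: F_juggling.
- by move=> m _; apply: GFm.
- by move=> ss J; apply/(kost_flow _ _ hr)/KG.
- by move=> ss J; apply: GF.
Qed.
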